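(* Let $\mu$ be a Borel measure on $\mathbb R$ with $\mu(\mathbb R)=1$ and $\mu(\{0\})\neq1$. Then for every $\sigma\in(0,+\infty)$, \[0<\inf_{\lambda_->0}\frac{\int_{y\in\mathbb R}(e^{\lambda_-y}-1)\,d\mu(y)+\sigma}{\lambda_-}+\inf_{\lambda_+>0}\frac{\int_{y\in\mathbb R}(e^{-\lambda_+y}-1)\,d\mu(y)+\sigma}{\lambda_+}.\]
   Context: The integrals and infima take values in $(-\infty,+\infty]$. *)

(* Defs.v *)
From HB Require Import structures.
From mathcomp Require Import all_boot all_order all_algebra.
From mathcomp Require Import all_classical all_reals all_analysis.
Set Implicit Arguments. Unset Strict Implicit. Unset Printing Implicit Defensive.

(* Main.v *)
Require Import Defs.
From HB Require Import structures.
From mathcomp Require Import all_boot all_order all_algebra.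
From mathcomp Require Import all_classical all_reals all_analysis.
From mathcomp Require Import measurable_realfun.
From mathcomp Require Import ring lra.
Import Order.TTheory GRing.Theory Num.Theory.
Local Open Scope classical_set_scope.
Local Open Scope ring_scope.
Lemma int_lb d (T : measurableType d) (R : realType) (mu : {measure set T -> \bar R})
  (f g : T -> \bar R) : measurable_fun [set: T] f -> mu.-integrable [set: T] g ->
  (forall x, (g x <= f x)%E) -> (\int[mu]_x g x <= \int[mu]_x f x)%E.
Proof.
move=> mf ig gf; rewrite (integralE _ _ g) (integralE _ _ f).
have mg : measurable_fun [set: T] g by case/integrableP: ig.
apply: leeB.
- apply: ge0_le_integral => //.
  + exact: measurable_funepos.
  + exact: measurable_funepos.
  + move=> x _; apply: (funepos_le (D := setT)); [move=> y _; exact: gf| exact: in_setT].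
- apply: ge0_le_integral => //.
  + exact: measurable_funeneg.
  + exact: measurable_funeneg.
  + move=> x _; apply: (funeneg_le (D := setT)); [move=> y _; exact: gf| exact: in_setT].
Qed.
Definition Sp {R : realType} (de : R) : set (measurableTypeR R) := `[de, +oo[%classic.
Definition Sm {R : realType} (de : R) : set (measurableTypeR R) := `]-oo, (- de)]%classic.
Lemma mSp {R : realType} (de : R) : measurable (Sp de). Proof. exact: measurable_itv. Qed.
Lemma mSm {R : realType} (de : R) : measurable (Sm de). Proof. exact: measurable_itv. Qed.
Lemma pos_mass (R : realType) (mu : probability (measurableTypeR R) R) :
  mu [set (0:R)] != 1%E ->
  exists2 de : R, 0 < de &
   ((0 < mu (Sp de))%E \/ (0 < mu (Sm de))%E).
Proof.
move=> h0; apply/not_exists2P => H; move/negP: h0; apply.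
pose F (n : nat) : set (measurableTypeR R) :=
  (Sp (n.+1%:R^-1) `|` Sm (n.+1%:R^-1)).
have mF n : measurable (F n) by apply: measurableU; [exact: mSp|exact: mSm].
have F0 n : mu (F n) = 0%E.
  have [|] := H (n.+1%:R^-1); first by rewrite invr_gt0.
  move=> /not_orP[/negP h1 /negP h2]; rewrite -leNgt in h1; rewrite -leNgt in h2.
  apply/eqP; rewrite eq_le measure_ge0 andbT.
  apply: le_trans (measureU2 _ _ _) _; [exact: mSp|exact: mSm|].
  by rewrite -(adde0 0%E) leeD.
have mC : measurable (~` [set (0:R)] : set (measurableTypeR R)).
  by apply: measurableC; exact: measurable_set1.
have : (mu (~` [set (0:R)%R]) <= 0)%E.
  apply: le_trans (measure_sigma_subadditive mu mF mC _) _.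
    move=> y /= /eqP y0; have ay : 0 < `|y| by rewrite normr_gt0.
    exists (Num.truncn (`|y|^-1)) => //.
    have hlt : `|y|^-1 < (Num.truncn (`|y|^-1)).+1%:R by exact: truncnS_gt.
    have : (Num.truncn (`|y|^-1)).+1%:R^-1 < `|y|.
      by rewrite -[X in _ < X]invrK ltf_pV2 ?posrE ?invr_gt0 // ltr0n.
    rewrite /F /Sp /Sm /= !in_itv /= andbT.
    case: (lerP 0 y) => [y0'|y0'].
      by rewrite ger0_norm // => /ltW h; left.
    by rewrite ltr0_norm // => /ltW h; right; rewrite lerNr.
  by rewrite eseries0 // => i _ _; exact: F0.
rewrite probability_setC; last exact: measurable_set1.
move=> h; apply/eqP; apply/le_anti/andP; split; first exact: probability_le1.
by move: h; rewrite leeBlDr ?fin_num_measure // add0e.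
Qed.
Definition Tl {R : realType} (N : R) : set (measurableTypeR R) :=
  `]-oo, (- N)[%classic `|` `]N, +oo[%classic.
Lemma mTl {R : realType} (N : R) : measurable (Tl N).
Proof. by apply: measurableU; exact: measurable_itv. Qed.

Lemma tail (R : realType) (mu : probability (measurableTypeR R) R) (e : R) :
  0 < e -> exists2 N : R, 0 <= N & (mu (Tl N) <= e%:E)%E.
Proof.
move=> e0; pose F (n : nat) := Tl (n%:R : R).
have mF n : measurable (F n) by exact: mTl.
have niF : nonincreasing_seq F.
  move=> n m nm; apply/subsetPset => y; rewrite /F /Tl /= !in_itv /= !andbT.
  have : (n%:R <= m%:R :> R) by rewrite ler_nat.
  move=> h [h1|h1]; [left; rewrite (lt_le_trans h1) // lerN2 //| right; exact: le_lt_trans h h1].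
have cap0 : \bigcap_n F n = set0.
  apply/seteqP; split => // y /= Hy.
  have := Hy (Num.truncn `|y|).+1 I; rewrite /F /Tl /= !in_itv /= andbT.
  have := truncnS_gt `|y| => hlt.
  have hn : ~ ((Num.truncn `|y|).+1%:R < `|y| :> R) by rewrite ltNge (ltW hlt).
  move=> H; apply: hn; rewrite ltr_normr; case: H => h; apply/orP; [right|left] => //.
  by rewrite ltrNr.
have fin0 : (mu (F 0%N) < +oo)%E.
  by apply: le_lt_trans (probability_le1 _ _) _; [exact: mF| exact: ltry].
have := @nonincreasing_cvg_mu _ _ _ mu F fin0 mF _ niF.
rewrite cap0 measure0 => /(_ measurable0) /fine_cvgP [_ hc].
have := cvgr_lt 0 hc e e0.
case=> n _ Hn; exists n%:R; first exact: ler0n.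
have := Hn n (leqnn n); rewrite /= => hlt.
rewrite -(@fineK _ (mu (Tl n%:R))) ?fin_num_measure ?lee_fin ?(ltW hlt) //; exact: mTl.
Qed.
Lemma intlow (R : realType) (mu : probability (measurableTypeR R) R)
  (h : measurableTypeR R -> R) (mh : measurable_fun [set: measurableTypeR R] h)
  (hn : forall y, `|h y| = `|y|) (N : R) (N0 : 0 <= N) (l : R) (l0 : 0 < l) :
  ((- (l * N))%:E - mu (Tl N) <= \int[mu]_y ((expR (l * h y) - 1)%R)%:E)%E.
Proof.
have mT := mTl N.
have -> : ((- (l * N))%:E - mu (Tl N) =
   \int[mu]_y ((- (l * N))%:E + (-1)%:E * (\1_(Tl N) y)%:E))%E.
  rewrite integralD //; last first.
  - apply: integrableZl => //; exact: integrable_indic.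
  - exact: finite_measure_integrable_cst.
  rewrite integral_cst // [X in (_ * X)%E](_ : _ = 1%E); last exact: probability_setT.
  rewrite mule1 integralZl //; last exact: integrable_indic.
  by rewrite integral_indic // setIT mulN1e.
apply: int_lb.
- apply/measurable_EFinP; apply: measurable_funB => //.
  apply: measurableT_comp; first exact: measurable_expR.
  apply: measurable_funM => //; exact: measurable_cst.
- apply: integrableD => //; first exact: finite_measure_integrable_cst.
  apply: integrableZl => //; exact: integrable_indic.
move=> y; rewrite -EFinM -EFinD lee_fin indicE.
case: (boolP (y \in Tl N)) => yT.
  rewrite /= mulr1; apply: lerD => //.
  apply: le_trans (_ : 0 <= _); last exact: ltW (expR_gt0 _).
  by rewrite oppr_le0 mulr_ge0 // ltW.
rewrite /= mulr0 addr0; apply: le_trans (_ : l * h y <= _).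
  rewrite -mulrN ler_pM2l // lerNl; apply: le_trans (ler_norm _) _.
  rewrite normrN hn; move: yT; rewrite notin_setE /Tl /= !in_itv /= andbT => H.
  rewrite ler_norml; apply/andP; split; rewrite leNgt; apply/negP => H'; apply: H.
    by left.
  by right.
by rewrite lerBrDl expR_ge1Dx.
Qed.
Lemma ex4 (R : realType) (x : R) : 0 <= x -> x + x ^+ 2 / 4 <= expR x - 1.
Proof.
move=> x0; have e2 : expR x = expR (x / 2) ^+ 2.
  by rewrite expr2 -expRD -splitr.
have h1 : 1 + x / 2 <= expR (x / 2) by exact: expR_ge1Dx.
have h0 : 0 <= 1 + x / 2 by rewrite addr_ge0 // divr_ge0.
have : (1 + x / 2) ^+ 2 <= expR (x / 2) ^+ 2 by rewrite ler_pXn2r // nnegrE (le_trans h0 h1).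
rewrite -e2 => h; rewrite lerBrDl; apply: le_trans h; rewrite sqrrD expr1n; lra.
Qed.

Lemma clamp_le (R : realType) (a b y : R) : a <= y -> Num.max a (Num.min y b) <= y.
Proof. by move=> ay; rewrite ge_max ay /= ge_min lexx. Qed.
Lemma clamp_le2 (R : realType) (a b y : R) : y < a -> Num.max a (Num.min y b) <= a.
Proof. by move=> ay; rewrite ge_max lexx /= ge_min (ltW ay). Qed.
Lemma clamp_ge (R : realType) (a b y : R) : y <= b -> y <= Num.max a (Num.min y b).
Proof. by move=> yb; rewrite le_max le_min lexx yb orbT. Qed.
Lemma clamp_ge2 (R : realType) (a b y : R) : b < y -> b <= Num.max a (Num.min y b).
Proof. by move=> yb; rewrite le_max le_min lexx (ltW yb) orbT. Qed.

Lemma pt1 (R : realType) (l m de : R) (y : measurableTypeR R) : 0 < l -> 0 < m -> 0 < de ->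
  l * Num.max (- l^-1) (Num.min y m^-1) + l * (l * (de ^+ 2 / 4)) * (\1_(Sp de) y)
  <= expR (l * y) - 1.
Proof.
move=> l0 m0 d0; rewrite indicE; case: (boolP (y \in Sp de)) => yS.
  move: yS; rewrite in_setE /Sp /= in_itv /= andbT => dy.
  have y0 : 0 < y := lt_le_trans d0 dy.
  have hc : Num.max (- l^-1) (Num.min y m^-1) <= y.
    apply: (@clamp_le R); apply: le_trans (ltW y0); rewrite oppr_le0 invr_ge0 ltW //.
  have hsq : de ^+ 2 <= y ^+ 2 by rewrite ler_pXn2r // nnegrE ltW // (lt_le_trans d0 dy).
  have E := @ex4 R _ (ltW (mulr_gt0 l0 y0)).
  apply: le_trans E.
  rewrite mulr1; apply: lerD; first by rewrite ler_pM2l.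
  rewrite exprMn !mulrA -expr2 ler_pM2r ?invr_gt0 ?ltr0n // -!mulrA ler_pM2l ?exprn_gt0 //.
  by rewrite ler_pM2l // -!expr2.
rewrite /= mulr0 addr0.
case: (lerP (- l^-1) y) => hy.
  apply: le_trans (_ : l * y <= _); first by rewrite ler_pM2l // (@clamp_le R).
  by rewrite lerBrDl expR_ge1Dx.
apply: le_trans (_ : l * (- l^-1) <= _); first by rewrite ler_pM2l // (@clamp_le2 R).
rewrite mulrN divff ?gt_eqF //.
have := expR_gt0 (l * y); lra.
Qed.

Lemma pt2 (R : realType) (l m de : R) (y : measurableTypeR R) : 0 < l -> 0 < m -> 0 < de ->
  m * (- Num.max (- l^-1) (Num.min y m^-1)) + m * (m * (de ^+ 2 / 4)) * (\1_(Sm de) y)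
  <= expR (m * (- y)) - 1.
Proof.
move=> l0 m0 d0; rewrite indicE; case: (boolP (y \in Sm de)) => yS.
  move: yS; rewrite in_setE /Sm /= in_itv /= => dy.
  have y0 : 0 < - y by lra.
  have hc : y <= Num.max (- l^-1) (Num.min y m^-1).
    apply: (@clamp_ge R); have : 0 < m^-1 by rewrite invr_gt0.
    lra.
  have hsq : de ^+ 2 <= (- y) ^+ 2 by rewrite ler_pXn2r ?nnegrE //; lra.
  apply: le_trans _ (@ex4 R _ (ltW (mulr_gt0 m0 y0))).
  rewrite mulr1; apply: lerD; first by rewrite ler_pM2l // lerN2.
  rewrite exprMn !mulrA -expr2 ler_pM2r ?invr_gt0 ?ltr0n // -!mulrA ler_pM2l ?exprn_gt0 //.
  by rewrite ler_pM2l // -!expr2.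
rewrite /= mulr0 addr0.
case: (boolP (y <= m^-1)) => hy; last rewrite -ltNge in hy.
  apply: le_trans (_ : m * (- y) <= _); first by rewrite ler_pM2l // lerN2; apply: (@clamp_ge R).
  by rewrite lerBrDl expR_ge1Dx.
apply: le_trans (_ : m * (- m^-1) <= _); first by rewrite ler_pM2l // lerN2; apply: (@clamp_ge2 R).
rewrite mulrN divff ?gt_eqF //; have := expR_gt0 (m * (- y)); lra.
Qed.

Lemma side_lb (R : realType) (mu : probability (measurableTypeR R) R) (s l c a : R)
  (E g1 : measurableTypeR R -> R) (A : set (measurableTypeR R)) :
  0 < l -> measurable_fun [set: measurableTypeR R] E ->
  mu.-integrable [set: measurableTypeR R] (EFin \o g1) -> measurable A ->
  (forall y, l * (c * g1 y) + l * a * \1_A y <= E y) ->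
  ((c * fine (\int[mu]_y (g1 y)%:E) + a * fine (mu A) + s / l)%:E <=
   ((\int[mu]_y (E y)%:E + s%:E) * (l^-1)%:E))%E.
Proof.
move=> l0 mE ig mA hE.
have fC := integrable_fin_num measurableT ig.
have fA : mu A \is a fin_num by exact: fin_num_measure.
have ig' : mu.-integrable [set: measurableTypeR R] (fun y => (g1 y)%:E) by exact: ig.
have key : (((l * c) * fine (\int[mu]_y (g1 y)%:E) + (l * a) * fine (mu A))%:E <=
            \int[mu]_y (E y)%:E)%E.
  have -> : (((l * c) * fine (\int[mu]_y (g1 y)%:E) + (l * a) * fine (mu A))%:E =
     \int[mu]_y ((l * c)%:E * (g1 y)%:E + (l * a)%:E * (\1_A y)%:E))%E.
    rewrite integralD //; last first.
    - apply: integrableZl => //; exact: integrable_indic.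
    - exact: integrableZl.
    rewrite integralZl // integralZl //; last exact: integrable_indic.
    by rewrite integral_indic // setIT EFinD !EFinM !fineK.
  apply: int_lb; first exact/measurable_EFinP.
    apply: integrableD => //; apply: integrableZl => //; exact: integrable_indic.
  by move=> y; rewrite -!EFinM -EFinD lee_fin -mulrA.
apply: le_trans (lee_wpmul2r _ (leeD2r s%:E key)); last by rewrite lee_fin invr_ge0 ltW.
rewrite -EFinD -EFinM lee_fin mulrDl mulrDl -!mulrA [l * _]mulrC.
set C := fine (\int[mu]_y (g1 y)%:E); set P := fine (mu A).
rewrite le_eqVlt; apply/orP; left; apply/eqP; field; exact: lt0r_neq0.
Qed.

Lemma Flow (R : realType) (mu : probability (measurableTypeR R) R) (s N : R)
  (h : measurableTypeR R -> R) (mh : measurable_fun [set: measurableTypeR R] h)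
  (hn : forall y, `|h y| = `|y|) :
  0 < s -> 0 <= N -> (mu (Tl N) <= (s / 2)%:E)%E -> forall l, 0 < l ->
  ((- N)%:E <= ((\int[mu]_y ((expR (l * h y) - 1)%R)%:E + s%:E) * (l^-1)%R%:E))%E.
Proof.
move=> s0 N0 hN l l0.
have H := @intlow R mu h mh hn N N0 l l0.
have H2 : ((- (l * N) - s / 2)%:E <= \int[mu]_y ((expR (l * h y) - 1)%R)%:E)%E.
  by apply: le_trans H; rewrite EFinB; apply: leeB.
apply: le_trans (lee_wpmul2r _ (leeD2r s%:E H2)); last by rewrite lee_fin invr_ge0 ltW.
rewrite -EFinD -EFinM lee_fin.
rewrite (_ : (- (l * N) - s / 2 + s) * l^-1 = - N + (s / 2) / l); last by field; exact: lt0r_neq0.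
by rewrite lerDl divr_ge0 // ?divr_ge0 // ltW.
Qed.

Lemma minle (R : realType) (s x t : R) : 0 < s -> 0 <= x -> 0 < t ->
  Num.min s x <= t * x + s / t.
Proof.
move=> s0 x0 t0; have st : 0 <= s / t by rewrite divr_ge0 // ltW.
have tx : 0 <= t * x by rewrite mulr_ge0 // ltW.
case: (lerP t 1) => t1.
  have : s <= s / t by rewrite ler_pdivlMr // ler_piMr // ltW.
  move=> h; rewrite ge_min; apply/orP; left; lra.
have : x <= t * x by rewrite ler_peMl // ltW.
move=> h; rewrite ge_min; apply/orP; right; lra.
Qed.

Lemma pair_lb (R : realType) (mu : probability (measurableTypeR R) R) (s de l m : R) :
  0 < s -> 0 < de -> 0 < l -> 0 < m ->
  ((Num.min s (de ^+ 2 / 4 * fine (mu (Sp de))) + Num.min s (de ^+ 2 / 4 * fine (mu (Sm de))))%:E <=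
   ((\int[mu]_y ((expR (l * y) - 1)%R)%:E + s%:E) * (l^-1)%R%:E) +
   ((\int[mu]_y ((expR (- m * y) - 1)%R)%:E + s%:E) * (m^-1)%R%:E))%E.
Proof.
move=> s0 d0 l0 m0.
pose cl := fun y : measurableTypeR R => Num.max (- l^-1) (Num.min y m^-1).
have mcl : measurable_fun [set: measurableTypeR R] cl.
  apply: measurable_maxr; first exact: measurable_cst.
  apply: measurable_minr; [exact: measurable_id | exact: measurable_cst].
have icl : mu.-integrable [set: measurableTypeR R] (EFin \o cl).
  apply: measurable_bounded_integrable => //.
    by rewrite (le_lt_trans (probability_le1 _ _)) ?ltry.
  rewrite /bounded_near; near=> M => y _ /=.
  have hb : `|cl y| <= l^-1 + m^-1.
    have li : 0 < l^-1 by rewrite invr_gt0.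
    have mi : 0 < m^-1 by rewrite invr_gt0.
    rewrite ler_norml; apply/andP; split.
      by rewrite le_max; apply/orP; left; lra.
    rewrite ge_max; apply/andP; split; first lra.
    by rewrite ge_min; apply/orP; right; lra.
  apply: le_trans hb _; near: M; apply: nbhs_pinfty_ge; exact: num_real.
have mE1 : measurable_fun [set: measurableTypeR R] (fun y : measurableTypeR R => expR (l * y) - 1).
  apply: measurable_funB => //; apply: measurableT_comp; first exact: measurable_expR.
  apply: measurable_funM => //; exact: measurable_cst.
have mE2 : measurable_fun [set: measurableTypeR R] (fun y : measurableTypeR R => expR (- m * y) - 1).
  apply: measurable_funB => //; apply: measurableT_comp; first exact: measurable_expR.
  apply: measurable_funM => //; exact: measurable_cst.
have F1 := @side_lb R mu s l 1 (l * (de ^+ 2 / 4)) _ cl (Sp de) l0 mE1 icl (mSp de)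
  (fun y => ltac:(rewrite mul1r; exact: pt1)).
have G1 := @side_lb R mu s m (-1) (m * (de ^+ 2 / 4)) _ cl (Sm de) m0 mE2 icl (mSm de)
  (fun y => ltac:(rewrite mulN1r mulNr -mulrN; exact: pt2)).
apply: le_trans (leeD F1 G1); rewrite lee_fin.
have P0 : 0 <= fine (mu (Sp de)) by apply: fine_ge0; exact: measure_ge0.
have Q0 : 0 <= fine (mu (Sm de)) by apply: fine_ge0; exact: measure_ge0.
have k0 : 0 <= de ^+ 2 / 4 by rewrite divr_ge0 // sqr_ge0.
have h1 := @minle R s _ l s0 (mulr_ge0 k0 P0) l0.
have h2 := @minle R s _ m s0 (mulr_ge0 k0 Q0) m0.
rewrite !mulrA in h1 h2 *.
lra.
Unshelve. all: by end_near.
Qed.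

Theorem lemma11 (R : realType) (mu : probability (measurableTypeR R) R)
  (hmu0 : mu [set (0 : R)] != 1%E) (sigma : R) (hsigma : 0 < sigma) :
  (0 <
   ereal_inf [set ((\int[mu]_y ((expR (l * y) - 1)%R)%:E + sigma%:E) * (l^-1)%R%:E)%E
             | l in [set l : R | (0 < l)%R]] +
   ereal_inf [set ((\int[mu]_y ((expR (- l * y) - 1)%R)%:E + sigma%:E) * (l^-1)%R%:E)%E
             | l in [set l : R | (0 < l)%R]])%E.
Proof.
have [de d0 hP] := @pos_mass R mu hmu0.
have [N N0 hN] := @tail R mu (sigma / 2) (divr_gt0 hsigma (ltr0n _ 2)).
set P := fine (mu (Sp de)); set Q := fine (mu (Sm de)).
set c := Num.min sigma (de ^+ 2 / 4 * P) + Num.min sigma (de ^+ 2 / 4 * Q).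
have P0 : 0 <= P by apply: fine_ge0; exact: measure_ge0.
have Q0 : 0 <= Q by apply: fine_ge0; exact: measure_ge0.
have k0 : 0 < de ^+ 2 / 4 by rewrite divr_gt0 // exprn_gt0.
have c0 : 0 < c.
  have m1 : 0 <= Num.min sigma (de ^+ 2 / 4 * P) by rewrite le_min (ltW hsigma) mulr_ge0 // ltW.
  have m2 : 0 <= Num.min sigma (de ^+ 2 / 4 * Q) by rewrite le_min (ltW hsigma) mulr_ge0 // ltW.
  case: hP => hp.
    have : 0 < P by rewrite /P -lte_fin fineK ?fin_num_measure //; exact: mSp.
    move=> pp; have : 0 < Num.min sigma (de ^+ 2 / 4 * P) by rewrite lt_min hsigma mulr_gt0.
    rewrite /c; lra.
  have : 0 < Q by rewrite /Q -lte_fin fineK ?fin_num_measure //; exact: mSm.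
  move=> pp; have : 0 < Num.min sigma (de ^+ 2 / 4 * Q) by rewrite lt_min hsigma mulr_gt0.
  rewrite /c; lra.
set a := ereal_inf _; set b := ereal_inf _.
have la : ((- N)%:E <= a)%E.
  apply: le_ereal_inf_tmp => x [l l0 <-].
  exact: (@Flow R mu sigma N (fun y => y) (@measurable_id _ _ _) (fun y => erefl) hsigma N0 hN l l0).
have lb : ((- N)%:E <= b)%E.
  apply: le_ereal_inf_tmp => x [l l0 <-].
  have -> : (fun y : measurableTypeR R => ((expR (- l * y) - 1)%R)%:E) =
      (fun y : measurableTypeR R => ((expR (l * (fun z : measurableTypeR R => - z) y) - 1)%R)%:E).
    by apply: funext => y /=; rewrite mulNr mulrN.
  apply: (@Flow R mu sigma N (fun y => - y)) => //.
    exact: oppr_measurable.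
  by move=> y; rewrite normrN.
have pair : forall l m, 0 < l -> 0 < m ->
   (c%:E <= ((\int[mu]_y ((expR (l * y) - 1)%R)%:E + sigma%:E) * (l^-1)%R%:E) +
   ((\int[mu]_y ((expR (- m * y) - 1)%R)%:E + sigma%:E) * (m^-1)%R%:E))%E.
  by move=> l m l0 m0; exact: pair_lb.
apply: lt_le_trans (_ : c%:E <= _)%E; first by rewrite lte_fin.
have aN : a != -oo%E by apply/negP => /eqP aN; move: la; rewrite aN.
have bN : b != -oo%E by apply/negP => /eqP bN; move: lb; rewrite bN.
have [ay|ay] := eqVneq a +oo%E; first by rewrite ay (addye bN) leey.
have [by_|by_] := eqVneq b +oo%E; first by rewrite by_ (addey aN) leey.
have af : a \is a fin_num by rewrite fin_numE aN ay.
have bf : b \is a fin_num by rewrite fin_numE bN by_.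
rewrite -(fineK af) -(fineK bf) -EFinD lee_fin leNgt; apply/negP => hlt.
pose e := (c - (fine a + fine b)) / 2.
have e0 : 0 < e by rewrite divr_gt0 // subr_gt0.
have [x [l l0 <-] hx] := lb_ereal_inf_adherent e0 af.
have [x' [m m0 <-] hx'] := lb_ereal_inf_adherent e0 bf.
have := pair l m l0 m0.
apply/negP; rewrite -ltNge.
apply: (lt_le_trans (lteD hx hx')).
rewrite -/a -/b.
clear hx hx' pair la lb; clearbody a b.
have Ea := esym (fineK af); have Eb := esym (fineK bf).
rewrite [in X in (X + _ <= _)%E]Ea [in X in (_ + X <= _)%E]Eb -!EFinD lee_fin /e.
move: (fine a) (fine b) hlt => ra rb hlt'.
lra.
Qed.
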